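(* Let $\mathcal{B}=\langle V,F,E\rangle$ be a finite bipartite graph and $W\subseteq V$ such that the subgraph of $\mathcal{B}$ induced by $(V\cup F)\setminus W$ is self-contained. Let $S=S_F\cup S_V$ be a cluster of the causal ordering graph $\mathrm{CO}(\mathcal{B})$ with $S\cap W=\emptyset$, where $S_F=S\cap F$ and $S_V=S\cap V$, and consider the perfect intervention $\mathrm{do}(S_F,S_V)$. Then the subgraph of $\mathcal{B}_{\mathrm{do}(S_F,S_V)}$ induced by $(V\cup F)\setminus W$ is self-contained.
   Context: $\mathrm{adj}_{\mathcal{B}}(X)$ is the set of vertices adjacent to some vertex of $X$. $F'\subseteq F$ is self-contained if $|F'|=|\mathrm{adj}_{\mathcal{B}}(F')|$ and $|F''|\le|\mathrm{adj}_{\mathcal{B}}(F'')|$ for all $F''\subseteq F'$; a bipartite graph is self-contained if both sides have equal size and the constraint side is self-contained; minimal self-contained = non-empty self-contained with no non-empty strict self-contained subset. Causal ordering graph $\mathrm{CO}(\mathcal{B})=\langle\mathcal{V},\mathcal{E}\rangle$ (Algorithm 1): start with $\mathcal{E}=\emptyset$, $\mathcal{V}=\{\{w\}:w\in W\}$, $\mathcal{B}'=\langle V',F',E'\rangle$ the subgraph induced by $(V\setminus W)\cup F$; while $\mathcal{B}'$ is non-null: choose a minimal self-contained set $S'_F$ of $\mathcal{B}'$, let $C=S'_F\cup\mathrm{adj}_{\mathcal{B}'}(S'_F)$, add $C$ to $\mathcal{V}$, add $v\to C$ for each $v\in\mathrm{adj}_{\mathcal{B}}(S'_F)\setminus\mathrm{adj}_{\mathcal{B}'}(S'_F)$,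 and replace $\mathcal{B}'$ by its subgraph induced by $(V'\cup F')\setminus C$. For such a cluster $S$ with $S\cap W=\emptyset$ one has $|S\cap F|=|S\cap V|=n$. Perfect intervention on the bipartite graph: enumerate $S_F=(f_1,\dots,f_n)$ and $S_V=(v_1,\dots,v_n)$; $\mathcal{B}_{\mathrm{do}(S_F,S_V)}=\langle V,F,E'\rangle$ where $E'$ consists of all edges of $E$ not incident to any $f_i$, together with the edges $(v_i-f_i)$, $i=1,\dots,n$. *)

(* Defs.v *)
From mathcomp Require Import all_boot.
Set Implicit Arguments. Unset Strict Implicit. Unset Printing Implicit Defensive.

(* Induced subgraphs are described by a pair of vertex
   sets (Vs, Fs). *)

Section Bip.
Variables (V F : finType) (E : F -> V -> bool).

Definition adj (Vs : {set V}) (X : {set F}) : {set V} :=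
  [set v in Vs | [exists f in X, E f v]].

Definition self_contained_set (Vs : {set V}) (Fs : {set F}) (X : {set F}) : bool :=
  [&& X \subset Fs, #|X| == #|adj Vs X|
    & [forall Y : {set F}, (Y \subset X) ==> (#|Y| <= #|adj Vs Y|)]].

Definition self_contained_graph (Vs : {set V}) (Fs : {set F}) : bool :=
  (#|Vs| == #|Fs|) && self_contained_set Vs Fs Fs.

Definition min_self_contained (Vs : {set V}) (Fs : {set F}) (X : {set F}) : bool :=
  [&& X != set0, self_contained_set Vs Fs X
    & [forall Y : {set F}, ((Y != set0) && (Y \proper X)) ==> ~~ self_contained_set Vs Fs Y]].

(* Complete runs of Algorithm 1 on the current graph B' (induced by Vs \cup Fs):
   the sequence of clusters C = (adj_{B'}(S'_F), S'_F) added, in order, until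
   B' is null.  The choice of minimal self-contained set is arbitrary. *)
Inductive CO_run : {set V} -> {set F} -> seq ({set V} * {set F}) -> Prop :=
| CO_nil : CO_run set0 set0 [::]
| CO_cons (Vs : {set V}) (Fs : {set F}) (S : {set F}) r :
    (Vs != set0) || (Fs != set0) ->
    min_self_contained Vs Fs S ->
    CO_run (Vs :\: adj Vs S) (Fs :\: S) r ->
    CO_run Vs Fs ((adj Vs S, S) :: r).

(* Perfect intervention do(S_F, S_V), with enumeration given by a bijection
   p : S_F -> S_V (f_i |-> v_i): edges at f in S_F are replaced by f - p f. *)
Definition intervene (SF : {set F}) (p : F -> V) : F -> V -> bool :=
  fun f v => if f \in SF then v == p f else E f v.

End Bip.

(* Main.v *)
Require Import Defs.
From mathcomp Require Import all_boot zify.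
Set Implicit Arguments. Unset Strict Implicit. Unset Printing Implicit Defensive.

Section Proofs.
Variables (V F : finType).

Definition hall (E : F -> V -> bool) (Vs : {set V}) (Fs : {set F}) :=
  forall Y : {set F}, Y \subset Fs -> #|Y| <= #|adj E Vs Y|.

Lemma card_disjU (T : finType) (A B : {set T}) :
  A :&: B = set0 -> #|A :|: B| = #|A| + #|B|.
Proof. by move=> h; rewrite -cardsUI h cards0 addn0. Qed.

Lemma adj_sub (E : F -> V -> bool) (Vs : {set V}) (X : {set F}) : adj E Vs X \subset Vs.
Proof. by apply/subsetP => v; rewrite inE => /andP[]. Qed.

Lemma adj_monoF (E : F -> V -> bool) (Vs : {set V}) (X Y : {set F}) : X \subset Y -> adj E Vs X \subset adj E Vs Y.
Proof.
move=> /subsetP XY; apply/subsetP => v; rewrite !inE => /andP[-> /existsP[f /andP[fX e]]].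
by apply/existsP; exists f; rewrite XY.
Qed.

Lemma adjU (E : F -> V -> bool) (Vs : {set V}) (A B : {set F}) : adj E Vs (A :|: B) = adj E Vs A :|: adj E Vs B.
Proof.
apply/setP => v; rewrite !inE; case: (v \in Vs) => //=.
apply/existsP/orP.
- by case=> f /andP[]; rewrite inE => /orP[] fA e; [left|right]; apply/existsP; exists f; rewrite fA.
- by case=> /existsP[f /andP[fA e]]; exists f; rewrite inE fA ?orbT.
Qed.

Lemma adjD (E : F -> V -> bool) (Vs : {set V}) (S : {set F}) (Y : {set F}) :
  adj E (Vs :\: adj E Vs S) Y = adj E Vs Y :\: adj E Vs S.
Proof.
apply/setP => v; rewrite !inE.
by case: (v \in Vs); rewrite ?andbF //= ?andbT; case: [exists f in S, E f v].
Qed.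

Lemma rem_hall (E : F -> V -> bool) (Vs : {set V}) (Fs S : {set F}) :
  hall E Vs Fs -> S \subset Fs -> #|S| = #|adj E Vs S| ->
  hall E (Vs :\: adj E Vs S) (Fs :\: S).
Proof.
move=> H SFs cS Y YD.
have YS : Y :&: S = set0.
  apply/setP => f; rewrite !inE; apply/negbTE/negP => /andP[fY fS].
  by move/subsetP: YD => /(_ f fY); rewrite inE fS.
have : Y :|: S \subset Fs.
  by rewrite subUset SFs andbT; apply: subset_trans YD (subsetDl _ _).
move/H; rewrite card_disjU // adjU cardsU -cS.
rewrite adjD.
have e := cardsID (adj E Vs S) (adj E Vs Y).
have : #|adj E Vs Y :&: adj E Vs S| <= #|adj E Vs S| by apply: subset_leq_card; apply: subsetIr.
rewrite -cS. lia.
Qed.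

Lemma run_sub (E : F -> V -> bool) (Vs : {set V}) (Fs : {set F}) r (SV : {set V}) (SF : {set F}) :
  CO_run E Vs Fs r -> (SV, SF) \in r -> SF \subset Fs.
Proof.
elim=> [|Vs0 Fs0 S r0 _ /and3P[_ /and3P[SFs _ _] _] _ IH] //.
rewrite inE => /orP[/eqP[_ ->] //|/IH h]; apply: subset_trans h (subsetDl _ _).
Qed.

Lemma main (E : F -> V -> bool) (Vs : {set V}) (Fs : {set F}) r (SV : {set V}) (SF : {set F}) (p : F -> V) :
  CO_run E Vs Fs r -> hall E Vs Fs -> (SV, SF) \in r ->
  {in SF &, injective p} -> p @: SF = SV ->
  hall (intervene E SF p) Vs Fs.
Proof.
move=> run; elim: run SV SF => [|Vs0 Fs0 S r0 _ mS run IH] SV SF //.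
case/and3P: mS => _ /and3P[SFs /eqP cS _] _.
move=> H; rewrite inE => /orP[/eqP[-> ->] pinj pim|inr pinj pim].
-
  move=> Y YFs.
  set Y1 := Y :&: S; set Y2 := Y :\: S.
  have hsub : p @: Y1 :|: (adj E Vs0 Y2 :\: adj E Vs0 S) \subset adj (intervene E S p) Vs0 Y.
    apply/subsetP => v; rewrite inE => /orP[/imsetP[f]|].
    + rewrite inE => /andP[fY fS] ->.
      have : p f \in adj E Vs0 S by rewrite -pim; apply: imset_f.
      rewrite inE => /andP[pV _]; rewrite inE pV /=.
      by apply/existsP; exists f; rewrite fY /intervene fS eqxx.
    + rewrite !inE => /andP[_ /andP[vV /existsP[f /andP[]]]]; rewrite inE => /andP[fS fY] e.
      rewrite vV; apply/existsP; exists f; rewrite fY /intervene (negbTE fS) //.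
  apply: leq_trans (subset_leq_card hsub).
  rewrite card_disjU; last first.
    apply/setP => v; rewrite !inE; apply/negbTE/negP => /andP[/imsetP[f]].
    rewrite inE => /andP[_ fS] -> /andP[/negP nin _]; apply: nin.
    have h : p f \in adj E Vs0 S by rewrite -pim; apply: imset_f.
    by move: h; rewrite inE.
  have c1 : #|p @: Y1| = #|Y1|.
    apply: card_in_imset => x y; rewrite !inE => /andP[_ xS] /andP[_ yS]; exact: pinj.
  have c2 : #|Y2| <= #|adj E Vs0 Y2 :\: adj E Vs0 S|.
    rewrite -adjD; apply: (rem_hall H SFs cS); exact: setSD.
  have := cardsID S Y; rewrite -/Y1 -/Y2; lia.
-
  have Hr := rem_hall H SFs cS.
  have IH' := IH SV SF Hr inr pinj pim.
  have SFsub := run_sub run inr.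
  move=> Y YFs.
  set Y1 := Y :&: S; set Y2 := Y :\: S.
  have hsub : adj E Vs0 Y1 :|: adj (intervene E SF p) (Vs0 :\: adj E Vs0 S) Y2
              \subset adj (intervene E SF p) Vs0 Y.
    apply/subsetP => v; rewrite inE => /orP[].
    + rewrite !inE => /andP[vV /existsP[f /andP[]]]; rewrite inE => /andP[fY fS] e.
      rewrite vV; apply/existsP; exists f; rewrite fY /intervene.
      have -> : (f \in SF) = false.
        apply/negbTE/negP => /(subsetP SFsub); by rewrite inE fS.
      done.
    + rewrite !inE => /andP[/andP[_ vV] /existsP[f /andP[]]]; rewrite inE => /andP[_ fY] e.
      by rewrite vV; apply/existsP; exists f; rewrite fY.
  apply: leq_trans (subset_leq_card hsub).
  rewrite card_disjU; last first.
    apply/setP => v; rewrite !inE; apply/negbTE/negP => /andP[/andP[hv h1] /andP[/andP[h2 _] _]].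
    move/negP: h2; apply; rewrite hv /=; case/existsP: h1 => f /andP[]; rewrite inE => /andP[_ fS] e.
    by apply/existsP; exists f; rewrite fS.
  have c1 : #|Y1| <= #|adj E Vs0 Y1|.
    apply: H; apply: subset_trans (subsetIr _ _) SFs.
  have c2 : #|Y2| <= #|adj (intervene E SF p) (Vs0 :\: adj E Vs0 S) Y2|.
    by apply: IH'; apply: setSD.
  have := cardsID S Y; rewrite -/Y1 -/Y2; lia.
Qed.

End Proofs.


Theorem lemma22 (V F : finType) (E : F -> V -> bool) (W : {set V})
    (run : seq ({set V} * {set F})) (SV : {set V}) (SF : {set F}) (p : F -> V) :
  self_contained_graph E (~: W) [set: F] ->
  CO_run E (~: W) [set: F] run ->
  (SV, SF) \in run ->
  [disjoint SV & W] ->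
  {in SF &, injective p} ->
  p @: SF = SV ->
  self_contained_graph (intervene E SF p) (~: W) [set: F].
Proof.
move=> /andP[/eqP csz /and3P[_ _ /forallP hY]] hrun inr _ pinj pim.
have H : hall E (~: W) [set: F] by move=> Y _; move: (hY Y) => /implyP; apply; apply: subsetT.
have H' := main hrun H inr pinj pim.
rewrite /self_contained_graph /self_contained_set csz eqxx subxx /=.
apply/andP; split.
  rewrite eqn_leq H' ?subxx // -csz; apply: subset_leq_card; apply: adj_sub.
by apply/forallP => Y; apply/implyP => _; apply: H'; apply: subsetT.
Qed.
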